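(* Let $G$ be a finite simple graph. Then $\eta(G)$ equals the maximum number of pairwise vertex-disjoint cycles in $G$ (this maximum being $0$ if $G$ is a forest).
   Context: A finite simple graph $G$ is regarded as a simplicial complex of dimension at most $1$. Its face poset $\mathcal{F}(G)$ is the directed graph whose vertices are the vertices and the edges of $G$, with a directed edge $e\to v$ whenever $v$ is an endpoint of the edge $e$ of $G$. A matching on $\mathcal{F}(G)$ is a set $m$ of edges of $\mathcal{F}(G)$, no two of which share an endpoint. Given a matching $m$, let $\mathcal{F}_m(G)$ be the directed graph obtained from $\mathcal{F}(G)$ by reversing the orientation of every edge in $m$; a directed cycle of $\mathcal{F}_m(G)$ (closed directed path with no repeated vertices) is said to be supported by $m$, and $J(m)$ is the number of directed cycles supported by $m$. The matching complex $\mathrm{M}(G)$ is the simplicial complex whose vertex set is the set of edges of $\mathcal{F}(G)$ and whose simplices are the nonempty matchings; $\mathrm{M}_k(G)$ is the subcomplex of simplices (matchings) $m$ with $J(m)\le k$. $\eta(G)$ is the smallest integer $k\ge0$ with $\mathrm{M}_k(G)=\mathrm{M}(G)$. A cycle of $G$ is a subgraph homeomorphic to a circle. *)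

(* Defs.v *)
From mathcomp Require Import all_boot.
Set Implicit Arguments. Unset Strict Implicit. Unset Printing Implicit Defensive.

Section FacePoset.
(* A finite simple graph: vertex type V, symmetric irreflexive adjacency g. *)
Variables (V : finType) (g : rel V).

Definition is_gedge (E : {set V}) : bool :=
  [exists u, exists v, g u v && (E == [set u; v])].

(* Vertices of the face poset F(G): vertices of G (inl) and edges of G (inr,
   only sets satisfying is_gedge are actual nodes). *)
Definition node := (V + {set V})%type.

(* Edges of F(G): pairs (E, v), the directed edge E -> v with v an endpoint of E. *)
Definition farc := ({set V} * V)%type.
Definition is_farc (a : farc) : bool := is_gedge a.1 && (a.2 \in a.1).

Definition matching (m : {set farc}) : bool :=
  [forall a in m, is_farc a] &&
  [forall a in m, forall b in m, (a != b) ==> ((a.1 != b.1) && (a.2 != b.2))].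

Definition darc (m : {set farc}) (x y : node) : bool :=
  match x, y with
  | inr E, inl v => is_farc (E, v) && ((E, v) \notin m)
  | inl v, inr E => is_farc (E, v) && ((E, v) \in m)
  | _, _ => false
  end.

Definition is_dcycle (m : {set farc}) (C : {set node * node}) : bool :=
  [exists n : 'I_(#|{: node}|).+1, exists f : {ffun 'I_n -> node},
     [&& 0 < (n : nat), injectiveb f,
         [forall i, darc m (f i) (f (ordS i))] &
         C == [set (f i, f (ordS i)) | i : 'I_n]]].

Definition J (m : {set farc}) : nat := #|[set C | is_dcycle m C]|.

Definition Mcomplex : {set {set farc}} := [set m | matching m & m != set0].

Definition Mk (k : nat) : {set {set farc}} := [set m in Mcomplex | J m <= k].

Lemma eta_exists : exists k, Mk k == Mcomplex.
Proof.
exists #|{: {set node * node}}|; apply/eqP/setP => m.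
rewrite inE andb_idr // => _; exact: max_card.
Qed.

Definition eta : nat := ex_minn eta_exists.

(* A cycle of G (a subgraph homeomorphic to a circle) is a cycle graph
   v_0 v_1 ... v_{n-1} v_0 with n >= 3 distinct vertices and consecutive
   vertices adjacent; we record its vertex set. *)
Definition is_cycle_vset (S : {set V}) : bool :=
  [exists n : 'I_(#|V|).+1, exists f : {ffun 'I_n -> V},
     [&& 3 <= (n : nat), injectiveb f,
         [forall i, g (f i) (f (ordS i))] &
         S == [set f i | i : 'I_n]]].

Definition max_disjoint_cycles : nat :=
  \max_(P : {set {set V}} | [forall S in P, is_cycle_vset S] && trivIset P) #|P|.

End FacePoset.

(* Main.v *)
Require Import Defs.
From mathcomp Require Import all_boot zify.
Set Implicit Arguments. Unset Strict Implicit. Unset Printing Implicit Defensive.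

Section Gen.
Variables (T R : finType).

Definition gcyc (N L : nat) (r : rel T) (k : T -> T -> R) (X : {set R}) : bool :=
 [exists n : 'I_N.+1, exists f : {ffun 'I_n -> T},
   [&& L <= n, injectiveb f, [forall i, r (f i) (f (ordS i))] &
       X == [set k (f i) (f (ordS i)) | i : 'I_n]]].

Definition periodic (n : nat) (u : nat -> T) := forall a, u a = u (a %% n).

Lemma periodicS n u : periodic n u -> forall a, u (a %% n).+1 = u a.+1.
Proof.
move=> Hu a; rewrite [LHS]Hu [RHS]Hu -(addn1 (a %% n)) -(addn1 a).
by rewrite modnDml.
Qed.

Lemma periodicD n u : periodic n u -> forall a, u (a + n) = u a.
Proof. by move=> Hu a; rewrite Hu modnDr -Hu. Qed.

Lemma gcycP N L (r : rel T) (k : T -> T -> R) (X : {set R}) : 0 < L ->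
  reflect (exists n u, [/\ L <= n <= N, periodic n u,
     (forall a b, a < n -> b < n -> u a = u b -> a = b),
     (forall a, r (u a) (u a.+1)) &
     X = [set k (u i) (u i.+1) | i : 'I_n]])
  (gcyc N L r k X).
Proof.
move=> L0; apply: (iffP existsP).
  case=> n /existsP [f /and4P [Ln /injectiveP finj /forallP fr /eqP ->]].
  have n0 : 0 < n by apply: leq_trans Ln.
  pose u a := f (Ordinal (ltn_pmod a n0)).
  have Hu : periodic n u.
    by move=> a; rewrite /u; f_equal; apply: val_inj; rewrite /= modn_mod.
  have fu : forall i : 'I_n, f i = u i.
    by move=> i; rewrite /u; f_equal; apply: val_inj; rewrite /= modn_small.
  have fuS : forall i : 'I_n, f (ordS i) = u i.+1.
    by move=> i; rewrite /u; f_equal; apply: val_inj.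
  exists n, u; split => //.
  - by rewrite Ln /= -ltnS ltn_ord.
  - move=> a b an bn; rewrite /u => /finj [].
    by rewrite !modn_small.
  - move=> a; have := fr (Ordinal (ltn_pmod a n0)).
    by rewrite fu fuS /= (periodicS Hu) -Hu.
  - by apply: eq_imset => i; rewrite fu fuS.
case=> n [u [/andP [Ln nN] Hu uinj ur ->]].
have n0 : 0 < n by apply: leq_trans Ln.
exists (Ordinal (nN : n < N.+1)) => /=.
apply/existsP; exists [ffun i : 'I_n => u i].
apply/and4P; split => //.
- by apply/injectiveP => i j; rewrite !ffunE => /uinj => h; apply: val_inj; apply: h.
- by apply/forallP => i; rewrite !ffunE /= -Hu.
- by apply/eqP; apply: eq_imset => i; rewrite !ffunE /= -Hu.
Qed.

Lemma mem_img n u (k : T -> T -> R) (Hu : periodic n u) (n0 : 0 < n) a :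
  k (u a) (u a.+1) \in [set k (u i) (u i.+1) | i : 'I_n].
Proof.
apply/imsetP; exists (Ordinal (ltn_pmod a n0)) => //=.
by rewrite periodicS // -Hu.
Qed.

Lemma per_shift d (h : nat -> T) : (forall a, h (a + d) = h a) -> periodic d h.
Proof.
move=> Hd a; rewrite {1}(divn_eq a d); elim: (a %/ d) => [|q IH] //.
by rewrite mulSn -addnA addnC Hd.
Qed.

End Gen.

Section Graph.
Variables (V : finType) (g : rel V).
Hypotheses (g_sym : symmetric g) (g_irr : irreflexive g).

Local Notation nd := (node V).

Lemma dcycE m C : is_dcycle g m C = gcyc #|{: nd}| 1 (darc g m) pair C.
Proof. by []. Qed.

Lemma cycE S : is_cycle_vset g S = gcyc #|V| 3 g (fun x _ => x) S.
Proof. by []. Qed.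

Lemma gedge2 E a b : is_gedge g E -> a \in E -> b \in E -> a != b ->
  g a b /\ E = [set a; b].
Proof.
case/existsP=> p /existsP [q /andP [gpq /eqP ->]].
rewrite !in_set2 => /orP[/eqP->|/eqP->] /orP[/eqP->|/eqP->]; rewrite ?eqxx //= => _.
by split; [rewrite g_sym | rewrite setUC].
Qed.

Lemma matchP m : matching g m -> forall a b, a \in m -> b \in m -> a != b ->
  (a.1 != b.1) && (a.2 != b.2).
Proof.
case/andP=> _ /forallP Hm a b am bm ab.
by have := Hm a; rewrite am /= => /forallP /(_ b); rewrite bm ab.
Qed.

Lemma match_farc m : matching g m -> forall a, a \in m -> is_farc g a.
Proof. by case/andP=> /forallP Hm _ a am; have := Hm a; rewrite am. Qed.

Lemma det m x y y' z : matching g m -> darc g m x y -> darc g m x y' ->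
  darc g m z x -> y = y'.
Proof.
move=> mm; case: x => [v|E]; case: y => [w|F] //; case: y' => [w'|F'] //.
  move=> /andP [_ H1] /andP [_ H2] _.
  have : (F, v) = (F', v).
    apply/eqP; apply/negPn/negP => ne; have := matchP mm H1 H2 ne.
    by rewrite /= eqxx andbF.
  by case=> ->.
case: z => [a|?] //.
rewrite /darc /is_farc /= => /andP [/andP [gE wE] wm] /andP [/andP [_ w'E] w'm] /andP [/andP [_ aE] am].
have wa : w != a by apply: contraNneq wm => ->.
have w'a : w' != a by apply: contraNneq w'm => ->.
have aw : a != w by rewrite eq_sym.
have [_ EE] := gedge2 gE aE wE aw.
move: w'E; rewrite EE in_set2 (negbTE w'a) /= => /eqP -> //.
Qed.

Definition Phi (C : {set nd * nd}) : {set V} :=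
  [set v | [exists y, (inl v, y) \in C]].

Definition isl (x : nd) := if x is inl _ then true else false.

Lemma darc_alt m x y : darc g m x y -> isl y = ~~ isl x.
Proof. by case: x; case: y. Qed.

Lemma sub_shift n (h : nat -> nd) n' h' i0 i0' :
  periodic n h -> i0 < n -> periodic n' h' -> 0 < n' ->
  (forall j, h (i0 + j) = h' (i0' + j)) ->
  [set (h i, h i.+1) | i : 'I_n] \subset [set (h' i, h' i.+1) | i : 'I_n'].
Proof.
move=> Hh i0n Hh' n0' key; apply/subsetP => _ /imsetP [i _ ->].
have e : i0 + (i + n - i0) = i + n.
  by rewrite subnKC // (leq_trans (ltnW i0n)) // leq_addl.
rewrite -(periodicD Hh i) -(periodicD Hh i.+1) addSn -e.
have := mem_img pair Hh' n0' (i0' + (i + n - i0)).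
by rewrite -addnS -!key addnS.
Qed.

Lemma uniqC m C C' x y y' : matching g m -> is_dcycle g m C -> is_dcycle g m C' ->
  (x, y) \in C -> (x, y') \in C' -> C = C'.
Proof.
move=> mm; rewrite !dcycE.
move=> /gcycP-/(_ isT) [n [h [/andP [n0 _] Hh hinj hr ->]]].
move=> /gcycP-/(_ isT) [n' [h' [/andP [n0' _] Hh' hinj' hr' ->]]].
case/imsetP=> i0 _ [e1 _]; case/imsetP=> i0' _ [e2 _].
have pred : forall (n : nat) (h : nat -> nd), periodic n h -> 0 < n ->
    (forall a, darc g m (h a) (h a.+1)) -> forall b, darc g m (h (b + n.-1)) (h b).
  move=> n1 h1 Hh1 n10 hr1 b; have := hr1 (b + n1.-1).
  rewrite -addnS prednK //.
  by rewrite (periodicD Hh1).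
have key : forall j, h (i0 + j) = h' (i0' + j).
  elim=> [|j IH]; first by rewrite !addn0 -e1 -e2.
  rewrite !addnS; apply: (det mm (hr _) _ (pred _ _ Hh n0 hr _)).
  by rewrite IH; apply: hr'.
apply/eqP; rewrite eqEsubset; apply/andP; split.
  exact: (sub_shift Hh (ltn_ord i0) Hh' n0' key).
apply: (@sub_shift n' h' n h i0' i0 Hh' (ltn_ord i0') Hh n0) => j.
by rewrite (key j).
Qed.


Lemma cyc_of_dcyc m C : matching g m -> is_dcycle g m C ->
  exists S, [/\ is_cycle_vset g S, S \subset Phi C & S != set0].
Proof.
move=> mm; rewrite dcycE => /gcycP-/(_ isT) [n [h [/andP [n0 _] Hh hinj hr ->]]].
have isl_alt a : isl (h a.+1) = ~~ isl (h a) by apply: darc_alt (hr a).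
have [j0 Hj0] : exists j0, isl (h j0).
  case e: (isl (h 0)); first by exists 0.
  by exists 1; rewrite isl_alt e.
have par : forall j, isl (h (j0 + j)) = ~~ odd j.
  by elim=> [|j IH]; [rewrite addn0 | rewrite addnS isl_alt IH].
have evn : ~~ odd n by rewrite -par (periodicD Hh).
set k := n./2.
have nk : n = k.*2.
  by have := odd_double_half n; rewrite (negbTE evn) add0n.
case e0: (h j0) => [v0|E0]; last by rewrite e0 in Hj0.
pose u t := if h (j0 + t.*2) is inl v then v else v0.
have hu : forall t, h (j0 + t.*2) = inl (u t).
  by move=> t; have := par t.*2; rewrite odd_double /u; case: (h _).
have hE : forall t, exists E, h (j0 + t.*2).+1 = inr E.
  move=> t; have := par (t.*2).+1; rewrite oddS odd_double addnS /=.
  by case: (h _) => // E _; exists E.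
have e2 : forall t, (j0 + t.*2).+2 = j0 + t.+1.*2 by move=> t; rewrite doubleS !addnS.
have step : forall t, exists E, [/\ h (j0 + t.*2).+1 = inr E, is_farc g (E, u t),
    (E, u t) \in m, is_farc g (E, u t.+1) & (E, u t.+1) \notin m].
  move=> t; have [E HE] := hE t; exists E.
  have d1 := hr (j0 + t.*2); rewrite hu HE in d1.
  have d2 := hr (j0 + t.*2).+1; rewrite HE e2 hu in d2.
  by case/andP: d1 => ? ?; case/andP: d2 => ? ?.
have gu : forall t, g (u t) (u t.+1).
  move=> t; have [E [_ /andP [gE aE] am /andP [_ bE] bm]] := step t.
  have ab : u t != u t.+1 by apply: contraNneq bm => <-.
  by case: (gedge2 gE aE bE ab).
have Hu : periodic k u.
  move=> t; suff : inl (u t) = inl (u (t %% k)) :> nd by case.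
  rewrite -!hu [LHS]Hh [RHS]Hh nk; f_equal.
  by rewrite -[(t %% k).*2]muln2 muln_modl !muln2 modnDmr.
have k0 : 0 < k by move: n0; rewrite nk double_gt0.
have uinj : forall a b, a < k -> b < k -> u a = u b -> a = b.
  move=> a b ak bk e.
  have : h (j0 + a.*2) = h (j0 + b.*2) by rewrite !hu e.
  rewrite Hh [RHS]Hh => /hinj.
  move=> /(_ (ltn_pmod _ n0) (ltn_pmod _ n0)) /eqP.
  rewrite eqn_modDl !modn_small ?nk ?ltn_double // => /eqP; exact: double_inj.
have k3 : 2 < k.
  rewrite ltnNge; apply/negP => k2.
  have [k1|k2'] : k = 1 \/ k = 2 by lia.
    have := gu 0; rewrite [u 1]Hu k1 /=.
    by rewrite g_irr.
  have u01 : u 0 != u 1 by apply/negP => /eqP e; have := gu 0; rewrite e g_irr.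
  have [E0 [h0 /andP [gE0 aE0] _ /andP [_ bE0] _]] := step 0.
  have [E1 [h1 /andP [gE1 bE1'] _ /andP [_ bE1] _]] := step 1.
  have aE1 : u 0 \in E1 by move: bE1; rewrite [u 2]Hu k2' modnn.
  have [_ EE0] := gedge2 gE0 aE0 bE0 u01.
  have [_ EE1] := gedge2 gE1 aE1 bE1' u01.
  simpl in EE0, EE1.
  have : h (j0 + 1) = h (j0 + 3).
    by move: h0 h1; rewrite /= addn0 !addnS addn0 EE0 EE1 => -> ->.
  rewrite Hh [RHS]Hh => /hinj.
  move=> /(_ (ltn_pmod _ n0) (ltn_pmod _ n0)) /eqP.
  by rewrite eqn_modDl nk k2'.
have kV : k <= #|V|.
  have := @leq_card _ _ (fun t : 'I_k => u t) _.
  rewrite card_ord; apply => i j /uinj e; apply: val_inj; exact: e.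
exists [set (fun x _ => x) (u i) (u i.+1) | i : 'I_k]; split.
- rewrite cycE; apply/gcycP => //; exists k, u; split => //.
  by rewrite k3.
- apply/subsetP => _ /imsetP [t _ ->] /=; rewrite inE; apply/existsP.
  exists (h (j0 + t.*2).+1); rewrite -hu; exact: (mem_img pair Hh n0).
- apply/set0Pn; exists (u 0); exact: (mem_img (fun x _ => x) Hu k0 0).
Qed.


Lemma J_le m : matching g m -> J g m <= max_disjoint_cycles g.
Proof.
move=> mm.
pose D := [set C | is_dcycle g m C].
pose psi C := odflt set0 [pick S | [&& is_cycle_vset g S, S \subset Phi C & S != set0]].
have Hpsi : forall C, C \in D ->
    [&& is_cycle_vset g (psi C), psi C \subset Phi C & psi C != set0].
  move=> C; rewrite inE => /(cyc_of_dcyc mm) [S [H1 H2 H3]].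
  rewrite /psi; case: pickP => [S' HS' | none] //.
  by have := none S; rewrite H1 H2 H3.
have disj : forall C C', C \in D -> C' \in D -> ~~ [disjoint psi C & psi C'] -> C = C'.
  move=> C C' HC HC'; rewrite -setI_eq0 => /set0Pn [v]; rewrite inE => /andP [v1 v2].
  case/and3P: (Hpsi C HC) => _ /subsetP s1 _; case/and3P: (Hpsi C' HC') => _ /subsetP s2 _.
  have := s1 v v1; rewrite inE => /existsP [y Hy].
  have := s2 v v2; rewrite inE => /existsP [y' Hy'].
  by apply: (uniqC mm _ _ Hy Hy'); rewrite -[is_dcycle _ _ _]in_set.
have -> : J g m = #|psi @: D|.
  rewrite card_in_imset // => C C' HC HC' e; apply: disj => //.
  case/and3P: (Hpsi C HC) => _ _ /set0Pn [v Hv].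
  rewrite -setI_eq0 e setIid; apply/set0Pn; exists v; by rewrite -e.
apply: (bigmax_sup (psi @: D)) => //; apply/andP; split.
  apply/forallP => S0; apply/implyP => /imsetP [C HC ->].
  by case/and3P: (Hpsi C HC).
apply/trivIsetP => A0 B0 /imsetP [C HC ->] /imsetP [C' HC' ->] ne.
apply/negPn/negP => nd; move: ne; by rewrite (disj _ _ HC HC' nd) eqxx.
Qed.


Definition goodMC (S : {set V}) (MC : {set farc V} * {set nd * nd}) : bool :=
  [&& matching g MC.1, [forall a in MC.1, (a.2 \in S) && (a.1 \subset S)],
      is_dcycle g MC.1 MC.2, (Phi MC.2 \subset S) && (Phi MC.2 != set0) &
      MC.1 != set0].

Lemma dcyc_of_cyc S : is_cycle_vset g S -> exists MC, goodMC S MC.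
Proof.
rewrite cycE => /gcycP-/(_ isT) [n [u [/andP [n3 nV] Hu uinj gu ->]]].
have n0 : 0 < n by apply: leq_trans n3.
have umod : forall a b, u a = u b -> a %% n = b %% n.
  move=> a b; rewrite Hu [u b]Hu => /uinj; apply; exact: ltn_pmod.
have ordE : forall i j : 'I_n, i %% n = j %% n -> i = j.
  by move=> i j; rewrite !modn_small // => e; apply: val_inj.
have usucc : forall a b, u a = u b -> u a.+1 = u b.+1.
  by move=> a b /umod e; rewrite -(periodicS Hu) e (periodicS Hu).
have unS : forall a, u a != u a.+1.
  by move=> a; apply/eqP => e; have := gu a; rewrite -e g_irr.
have no2 : forall a, u a != u a.+2.
  move=> a; apply/eqP => /umod /eqP.
  rewrite -[a in a %% n]addn0 -addn2 eqn_modDl mod0n modn_small //.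
have set2 : forall x y, [set u x; u x.+1] = [set u y; u y.+1] -> x %% n = y %% n.
  move=> x y e.
  have : u x \in [set u y; u y.+1] by rewrite -e set21.
  rewrite in_set2 => /orP [/eqP/umod // | /eqP e1].
  have : u y \in [set u x; u x.+1] by rewrite e set21.
  rewrite in_set2 => /orP [/eqP/umod e3 | /eqP e2]; first by rewrite e3.
  by have := no2 x; rewrite e1 (usucc _ _ e2) eqxx.
have memS : forall a, u a \in [set (fun x _ => x) (u i) (u i.+1) | i : 'I_n].
  by move=> a; exact: (mem_img (fun x _ => x) Hu n0 a).
pose M := [set (fun x y => ([set x; y], x)) (u i) (u i.+1) | i : 'I_n].
have memM : forall a, ([set u a; u a.+1], u a) \in M.
  by move=> a; exact: (mem_img (fun x y => ([set x; y], x)) Hu n0 a).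
have edge : forall a, is_gedge g [set u a; u a.+1].
  by move=> a; apply/existsP; exists (u a); apply/existsP; exists (u a.+1); rewrite gu eqxx.
have mM : matching g M.
  apply/andP; split.
    apply/forallP => b; apply/implyP => /imsetP [i _ ->].
    by rewrite /is_farc /= set21 andbT.
  apply/forallP => b; apply/implyP => /imsetP [i _ ->].
  apply/forallP => b'; apply/implyP => /imsetP [j _ ->]; apply/implyP => ne /=.
  apply/andP; split.
    by apply: contra ne => /eqP/set2/ordE ->.
  by apply: contra ne => /eqP/umod/ordE ->.
pose H a := if odd a then inr [set u a./2; u a./2.+1] else inl (u a./2) : nd.
have HH : periodic n.*2 H.
  apply: per_shift => a.
  by rewrite /H oddD odd_double addbF halfD odd_double andbF add0n doubleK -addSn !(periodicD Hu).
have n20 : 0 < n.*2 by rewrite double_gt0.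
have hS : forall a, a.+1./2 = odd a + a./2 by move=> a; rewrite -uphalf_half.
exists (M, [set (H i, H i.+1) | i : 'I_n.*2]); apply/and5P; split => //=.
- apply/forallP => b; apply/implyP => /imsetP [i _ ->] /=.
  rewrite memS /=; apply/subsetP => w; rewrite in_set2.
  by case/orP => /eqP ->; rewrite memS.
- rewrite dcycE; apply/gcycP => //; exists n.*2, H; split => //.
  + rewrite n20 /=.
    have -> : #|{: nd}| = #|V| + #|{: {set V}}| by rewrite card_sum.
    rewrite -addnn leq_add //.
    apply: leq_trans nV _.
    by have := @leq_card _ _ (fun v : V => [set v]) (@set1_inj _).
  + move=> a b an bn; rewrite /H.
    have ha : forall c, c < n.*2 -> c./2 < n by move=> c; rewrite ltn_half_double.
    case oa: (odd a); case ob: (odd b) => //= -[] e.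
      have [e'] := ordE (Ordinal (ha _ an)) (Ordinal (ha _ bn)) (set2 _ _ e).
      by rewrite -(odd_double_half a) -(odd_double_half b) oa ob e'.
    have [e'] := ordE (Ordinal (ha _ an)) (Ordinal (ha _ bn)) (umod _ _ e).
    by rewrite -(odd_double_half a) -(odd_double_half b) oa ob e'.
  + move=> a; rewrite /H hS /=; case oa: (odd a) => /=.
      rewrite /is_farc /= edge set22 /=.
      apply/negP => /imsetP [j _ [e1 e2]].
      have := unS a./2; rewrite e2.
      by rewrite [u a./2]Hu [u j]Hu (set2 _ _ e1) eqxx.
    by rewrite /is_farc /= !add0n edge set21 memM.
- apply/andP; split.
    apply/subsetP => v; rewrite inE => /existsP [y /imsetP [i _ [e1 _]]].
    move: e1; rewrite /H; case: (odd i) => e1; first by discriminate e1.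
    by case: e1 => ->; exact: memS.
  apply/set0Pn; exists (u 0); rewrite inE; apply/existsP; exists (H 1).
  by have := mem_img pair HH n20 0.
- by apply/set0Pn; exists ([set u 0; u 1], u 0); exact: memM.
Qed.


Lemma lift (M m' : {set farc V}) (C : {set nd * nd}) : is_dcycle g M C -> M \subset m' ->
  (forall a, a \in m' -> a.2 \in Phi C -> a \in M) -> is_dcycle g m' C.
Proof.
rewrite !dcycE => /gcycP-/(_ isT) [n [h [nb Hh hinj hr eC]]] sub back.
have n0 : 0 < n by case/andP: nb.
apply/gcycP => //; exists n, h; split => // a.
have := hr a.
case e1: (h a) => [v|E]; case e2: (h a.+1) => [w|F] //=.
  by case/andP=> f Fm; rewrite f (subsetP sub _ Fm).
case/andP=> f wm; rewrite f /=; apply: contra wm => wm'; apply: back wm' _.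
rewrite inE /=; apply/existsP; exists (h a.+2); rewrite eC -e2.
exact: (mem_img pair Hh n0 a.+1).
Qed.

Lemma bigP (P : {set {set V}}) : [forall S in P, is_cycle_vset g S] -> trivIset P ->
  0 < #|P| -> exists m, m \in Mcomplex g /\ #|P| <= J g m.
Proof.
move=> /forallP Pc /trivIsetP Pt P0.
pose pk S := odflt (set0, set0) [pick MC | goodMC S MC].
have good : forall S, S \in P -> goodMC S (pk S).
  move=> S SP; have := Pc S; rewrite SP /= => /dcyc_of_cyc [MC HMC].
  rewrite /pk; case: pickP => [MC' HMC'|none]; first exact: HMC'.
  by have := none MC; rewrite HMC.
have dj : forall S S' v, S \in P -> S' \in P -> v \in S -> v \in S' -> S = S'.
  move=> S S' v SP S'P vS vS'; apply/eqP; apply/negPn/negP => ne.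
  have := Pt _ _ SP S'P ne; rewrite -setI_eq0 => /eqP e.
  have vI : v \in S :&: S' by rewrite inE vS vS'.
  by rewrite e inE in vI.
have mem2 : forall S a, S \in P -> a \in (pk S).1 -> (a.2 \in S) && (a.1 \subset S).
  move=> S a SP aS; case/and5P: (good S SP) => _ /forallP H _ _ _.
  exact: (implyP (H a) aS).
pose m := \bigcup_(S in P) (pk S).1.
have mm : matching g m.
  apply/andP; split.
    apply/forallP => a; apply/implyP => /bigcupP [S SP aS].
    case/and5P: (good S SP) => mS _ _ _ _; exact: match_farc mS a aS.
  apply/forallP => a; apply/implyP => /bigcupP [S SP aS].
  apply/forallP => b; apply/implyP => /bigcupP [S' S'P bS']; apply/implyP => ab.
  case: (eqVneq S S') => [eSS'|nSS'].
    subst S'; case/and5P: (good S SP) => mS _ _ _ _; exact: matchP mS _ _ aS bS' ab.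
  case/andP: (mem2 _ _ SP aS) => a2S a1S; case/andP: (mem2 _ _ S'P bS') => b2S b1S.
  apply/andP; split.
    apply/eqP => e; move/eqP: nSS'; apply; apply: (dj _ _ a.2 SP S'P a2S).
    apply: (subsetP b1S); rewrite -e.
    case/and5P: (good S SP) => mS _ _ _ _.
    by case/andP: (match_farc mS aS).
  apply/eqP => e; move/eqP: nSS'; apply; apply: (dj _ _ a.2 SP S'P a2S).
  by rewrite e.
exists m; split.
  rewrite inE mm /=; case/card_gt0P: P0 => S SP.
  case/and5P: (good S SP) => _ _ _ _ /set0Pn [a aS].
  by apply/set0Pn; exists a; apply/bigcupP; exists S.
have dC : forall S, S \in P -> is_dcycle g m (pk S).2.
  move=> S SP; case/and5P: (good S SP) => _ _ dS /andP [PhiS _] _.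
  apply: (lift dS).
    by apply/subsetP => a aS; apply/bigcupP; exists S.
  move=> a /bigcupP [S' S'P aS'] a2.
  case/andP: (mem2 _ _ S'P aS') => a2S' _.
  by have := dj _ _ _ SP S'P (subsetP PhiS _ a2) a2S' => ->.
rewrite /J -(card_in_imset (f := fun S => (pk S).2) (D := P)).
  apply: subset_leq_card; apply/subsetP => _ /imsetP [S SP ->].
  by rewrite inE dC.
move=> S S' SP S'P /= e.
case/and5P: (good S SP) => _ _ _ /andP [PhiS /set0Pn [v vP]] _.
case/and5P: (good S' S'P) => _ _ _ /andP [PhiS' _] _.
apply: (dj _ _ v SP S'P); first exact: (subsetP PhiS).
by apply: (subsetP PhiS'); rewrite -e.
Qed.

End Graph.

Unset Implicit Arguments.

Theorem mainTheorem4 (V : finType) (g : rel V)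
    (g_sym : symmetric g) (g_irr : irreflexive g) :
  eta g = max_disjoint_cycles g.
Proof.
rewrite /eta; case: ex_minnP => e He Hmin.
apply/eqP; rewrite eqn_leq; apply/andP; split.
  apply: Hmin; apply/eqP/setP => m; rewrite inE; apply/andb_idr.
  by rewrite inE => /andP [mm _]; apply: J_le.
apply/bigmax_leqP => P /andP [Pc Pt].
case: (posnP #|P|) => [-> // | P0].
have [m [mC Jm]] := bigP g_irr Pc Pt P0.
apply: leq_trans Jm _.
have : m \in Mk g e by rewrite (eqP He).
by rewrite inE => /andP [_].
Qed.
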